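(* Let $d=(d_1,\dots,d_n)$ (with $n\ge 1$) be a degree sequence and $\overline d=(\overline d_1,\dots,\overline d_n)=(n-1-d_n,\dots,n-1-d_1)$ its complementary sequence. Then $n\le m(d)+m(\overline d)\le n+1$. Moreover $m(d)+m(\overline d)=n+1$ if and only if $d_{m(d)}=m(d)-1$.
   Context: Degree sequences (of finite simple graphs, terms may be $0$) are listed in nonincreasing order. For such a sequence $d$, $m(d)=\max\{i : d_i\ge i-1\}$. *)

(* Defs.v *)
From mathcomp Require Import all_boot.
Set Implicit Arguments. Unset Strict Implicit. Unset Printing Implicit Defensive.

(* A sequence d = [d_1; ...; d_n] (stored 0-based: d_i = nth 0 d (i-1)) is a
   degree sequence if it is nonincreasing and there is a finite simple graph
   on the vertex set 'I_n (symmetric irreflexive relation) in which vertex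
   i-1 has degree d_i. *)
Definition is_degree_seq (d : seq nat) : Prop :=
  sorted geq d /\
  exists e : rel 'I_(size d),
    [/\ symmetric e, irreflexive e &
        forall i : 'I_(size d), nth 0 d i = #|[pred j | e i j]| ].

(* m(d) = max { i in 1..n : d_i >= i - 1 }  (0 if no such i, impossible for n >= 1). *)
Definition mdeg (d : seq nat) : nat :=
  \max_(i < size d | i <= nth 0 d i) i.+1.

(* complementary sequence: dbar_i = n - 1 - d_(n+1-i) *)
Definition compl_seq (d : seq nat) : seq nat :=
  rev (map (fun x => size d - 1 - x) d).

(* Main.v *)
Require Import Defs.
From mathcomp Require Import all_boot.
From mathcomp Require Import zify.

Lemma mdeg_spec (s : seq nat) :
  1 <= size s ->
  (forall i j, i <= j < size s -> nth 0 s j <= nth 0 s i) ->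
  1 <= mdeg s <= size s /\
  forall i, i < size s -> (i <= nth 0 s i <-> i < mdeg s).
Proof.
move=> Hn Hmon.
have Hup : forall i : 'I_(size s), i <= nth 0 s i -> i < mdeg s.
  move=> i Hi; rewrite /mdeg.
  exact: (@leq_bigmax_cond _ (fun i : 'I_(size s) => i <= nth 0 s i) (fun i : 'I_(size s) => i.+1) i Hi).
have Hc : 0 < #|(fun i : 'I_(size s) => i <= nth 0 s i)|.
  apply/card_gt0P; exists (Ordinal Hn); by rewrite /in_mem /=.
have [i0 Hi0 Heq0] := @eq_bigmax_cond _ (fun i : 'I_(size s) => i <= nth 0 s i)
   (fun i : 'I_(size s) => i.+1) Hc.
have Heq : mdeg s = i0.+1 by exact: Heq0.
rewrite /in_mem /= in Hi0.
split.
  by rewrite Heq ltn_ord.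
move=> i Hi; split.
  by move=> H; exact: (Hup (Ordinal Hi) H).
rewrite Heq ltnS => Hle.
apply: (leq_trans Hle); apply: (leq_trans Hi0); apply: Hmon.
by rewrite Hle ltn_ord.
Qed.

Theorem lemma5 (d : seq nat) :
  1 <= size d -> is_degree_seq d ->
  (size d <= mdeg d + mdeg (compl_seq d) <= (size d).+1)
  /\ (mdeg d + mdeg (compl_seq d) = (size d).+1 <->
      nth 0 d (mdeg d).-1 = (mdeg d).-1).
Proof.
move=> Hn [Hs [e [_ Hirr Hdeg]]].
set n := size d.
have Hmon : forall i j, i <= j < n -> nth 0 d j <= nth 0 d i.
  move=> i j /andP [Hij Hj].
  have Htr : transitive geq by move=> x y z H1 H2; exact: (leq_trans H2 H1).
  have := sorted_leq_nth Htr (fun x => leqnn x) 0 Hs.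
  move=> /(_ i j); rewrite !inE; apply => //; exact: leq_ltn_trans Hj.
have Hbd : forall i, i < n -> nth 0 d i <= n.-1.
  move=> i Hi; rewrite (Hdeg (Ordinal Hi)).
  rewrite -ltnS prednK //; rewrite -[X in _ < X](card_ord n).
  apply: proper_card; apply/properP; split.
    by apply/subsetP.
  by exists (Ordinal Hi) => //; rewrite inE /= Hirr.
have Hsz : size (compl_seq d) = n by rewrite /compl_seq size_rev size_map.
have Hnth : forall i, i < n ->
    nth 0 (compl_seq d) i = n - 1 - nth 0 d (n - 1 - i).
  move=> i Hi; rewrite /compl_seq nth_rev size_map // (nth_map 0); last lia.
  rewrite /n; congr (_ - _ - nth 0 d _); lia.
have [/andP [Hm1 Hm2] H1] := mdeg_spec d Hn Hmon.
have Hmon' : forall i j, i <= j < size (compl_seq d) ->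
    nth 0 (compl_seq d) j <= nth 0 (compl_seq d) i.
  rewrite Hsz => i j /andP [Hij Hj].
  rewrite !Hnth //; last lia.
  have := Hmon (n - 1 - j) (n - 1 - i); lia.
have [/andP [Hm1' Hm2'] H2] := mdeg_spec (compl_seq d) (leq_trans Hn (eq_leq (esym Hsz))) Hmon'.
rewrite Hsz in Hm2' H2.
set m := mdeg d in Hm1 Hm2 H1 *.
set m' := mdeg (compl_seq d) in Hm1' Hm2' H2 *.
have H3 : forall j, j < n -> (nth 0 d j <= j <-> n - 1 - j < m').
  move=> j Hj; have := H2 (n - 1 - j) ltac:(lia); rewrite Hnth; last lia.
  have := Hbd j Hj; have -> : n - 1 - (n - 1 - j) = j by lia.
  move=> Hb [A B]; split.
    move=> H; apply: A; lia.
  move=> H; have := B H; lia.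
have Hm0 := proj2 (H1 m.-1 ltac:(lia)) ltac:(lia).
split; first (apply/andP; split).
- case: (ltnP m n) => Hmn; last lia.
  have Hf : ~ (m <= nth 0 d m) by move=> /(proj1 (H1 m Hmn)); rewrite ltnn.
  have := proj1 (H3 m Hmn) ltac:(lia); lia.
- case: (leqP m 1) => Hm; first lia.
  case: (leqP m' (n - m + 1)) => Hc; first lia.
  have := proj2 (H3 (m - 2) ltac:(lia)) ltac:(lia).
  have := Hmon (m - 2) m.-1 ltac:(lia); lia.
- split => H.
  + have := proj2 (H3 m.-1 ltac:(lia)) ltac:(lia); lia.
  + have := proj1 (H3 m.-1 ltac:(lia)) ltac:(lia).
    case: (leqP m 1) => Hm; first lia.
    case: (leqP m' (n - m + 1)) => Hc; first lia.
    have := proj2 (H3 (m - 2) ltac:(lia)) ltac:(lia).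
    have := Hmon (m - 2) m.-1 ltac:(lia); lia.
Qed.
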